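(* Let $m_\alpha>0$ and $m_\beta>0$ be two masses, let $t_1<t_2$, and let $(q_{\alpha 1},p_{\alpha 1})$, $(q_{\beta 1},p_{\beta 1})\in\mathbb{R}^3\times\mathbb{R}^3$ be initial positions and momenta. For $\gamma\in\{\alpha,\beta\}$ let $(q_\gamma(t),p_\gamma(t))$ be the classical trajectory of a particle of mass $m_\gamma$ governed by the Hamiltonian $H_{m_\gamma}$ (described in the context) with $(q_\gamma(t_1),p_\gamma(t_1))=(q_{\gamma 1},p_{\gamma 1})$, and set $(q_{\gamma 2},p_{\gamma 2})=(q_\gamma(t_2),p_\gamma(t_2))$. Then \[ \frac{S_{cl}(t_2,t_1,q_{\alpha 1},p_{\alpha 1})}{m_\alpha}-\frac12\Big(\frac{p_{\alpha 2}}{m_\alpha}+\frac{p_{\beta 2}}{m_\beta}\Big)\cdot q_{\alpha 2}+\frac12\Big(\frac{p_{\alpha 1}}{m_\alpha}+\frac{p_{\beta 1}}{m_\beta}\Big)\cdot q_{\alpha 1} \] \[ =\frac{S_{cl}(t_2,t_1,q_{\beta 1},p_{\beta 1})}{m_\beta}-\frac12\Big(\frac{p_{\alpha 2}}{m_\alpha}+\frac{p_{\beta 2}}{m_\beta}\Big)\cdot q_{\beta 2}+\frac12\Big(\frac{p_{\alpha 1}}{m_\alpha}+\frac{p_{\beta 1}}{m_\beta}\Big)\cdot q_{\beta 1}, \] where the action on the left is computed for mass $m_\alpha$ and the one on the right for mass $m_\beta$. Equivalently, \[ \Big[\tfrac{S_{cl}(t_2,t_1,q_{\alpha 1},p_{\alpha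 1})}{m_\alpha}-\tfrac{p_{\alpha 2}}{m_\alpha}\cdot q_{\alpha 2}+\tfrac{p_{\alpha 1}}{m_\alpha}\cdot q_{\alpha 1}\Big]-\Big[\tfrac{S_{cl}(t_2,t_1,q_{\beta 1},p_{\beta 1})}{m_\beta}-\tfrac{p_{\beta 2}}{m_\beta}\cdot q_{\beta 2}+\tfrac{p_{\beta 1}}{m_\beta}\cdot q_{\beta 1}\Big] =\Big(\tfrac{p_{\beta 2}}{m_\beta}-\tfrac{p_{\alpha 2}}{m_\alpha}\Big)\cdot\tfrac{q_{\alpha 2}+q_{\beta 2}}{2}-\Big(\tfrac{p_{\beta 1}}{m_\beta}-\tfrac{p_{\alpha 1}}{m_\alpha}\Big)\cdot\tfrac{q_{\alpha 1}+q_{\beta 1}}{2}. \]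
   Context: For a particle of mass $m>0$ with position $q\in\mathbb{R}^3$ and momentum $p\in\mathbb{R}^3$, the (time-dependent) external Hamiltonian is \[ H_m(q,p,t)=\frac{1}{2m}\,p\cdot G(t)\,p-\frac{m}{2}\,q\cdot\Gamma(t)\,q-\Omega(t)\cdot(q\times p)-m\,g(t)\cdot q, \] where $G(t)$ is a continuous family of real symmetric invertible $3\times3$ matrices, $\Gamma(t)$ a continuous family of real symmetric $3\times 3$ matrices (gravity gradient), $\Omega(t)\in\mathbb{R}^3$ a continuous rotation vector and $g(t)\in\mathbb{R}^3$ a continuous gravity vector; the functions $G,\Gamma,\Omega,g$ are the same for all masses. The classical trajectory of mass $m$ is the solution of Hamilton's equations $\dot q=\partial_p H_m$, $\dot p=-\partial_q H_m$ with the given initial data. The classical action is $S_{cl}(t_2,t_1,q_1,p_1)=\int_{t_1}^{t_2}\big(p\cdot\dot q-H_m(q,p,t)\big)\,dt$ evaluated along the classical trajectory of mass $m$ starting from $(q_1,p_1)$ at time $t_1$. A dot between vectors denotes the Euclidean inner product. *)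

(* Defs.v *)
From Stdlib Require Import Reals Lra.
From Coquelicot Require Import Coquelicot.
Open Scope R_scope.

(* Vectors of R^3 are represented by functions nat -> R; only the
   components 0,1,2 are meaningful. 3x3 matrices likewise by nat -> nat -> R. *)
Definition vec := nat -> R.
Definition mat := nat -> nat -> R.

Definition dot (u v : vec) : R := u 0%nat * v 0%nat + u 1%nat * v 1%nat + u 2%nat * v 2%nat.

Definition cross (u v : vec) : vec := fun i =>
  match i with
  | 0%nat => u 1%nat * v 2%nat - u 2%nat * v 1%nat
  | 1%nat => u 2%nat * v 0%nat - u 0%nat * v 2%nat
  | 2%nat => u 0%nat * v 1%nat - u 1%nat * v 0%nat
  | _ => 0
  end.

Definition mulmv (M : mat) (v : vec) : vec := fun i =>
  M i 0%nat * v 0%nat + M i 1%nat * v 1%nat + M i 2%nat * v 2%nat.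

Definition mulmm (M N : mat) : mat := fun i j =>
  M i 0%nat * N 0%nat j + M i 1%nat * N 1%nat j + M i 2%nat * N 2%nat j.

Definition kron (i j : nat) : R := if Nat.eqb i j then 1 else 0.

Definition symmetric (M : mat) : Prop :=
  forall i j, (i < 3)%nat -> (j < 3)%nat -> M i j = M j i.

Definition invertible (M : mat) : Prop :=
  exists N : mat, forall i j, (i < 3)%nat -> (j < 3)%nat ->
    mulmm M N i j = kron i j /\ mulmm N M i j = kron i j.

Definition upd (v : vec) (i : nat) (s : R) : vec :=
  fun j => if Nat.eqb j i then s else v j.

Definition Ham (G Gam : R -> mat) (Om g : R -> vec) (m : R) (q p : vec) (t : R) : R :=
  / (2 * m) * dot p (mulmv (G t) p) - m / 2 * dot q (mulmv (Gam t) q)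
  - dot (Om t) (cross q p) - m * dot (g t) q.

Definition dH_dp G Gam Om g m (q p : vec) (t : R) (i : nat) : R :=
  Derive (fun s => Ham G Gam Om g m q (upd p i s) t) (p i).
Definition dH_dq G Gam Om g m (q p : vec) (t : R) (i : nat) : R :=
  Derive (fun s => Ham G Gam Om g m (upd q i s) p t) (q i).

Definition hamilton_traj G Gam Om g m (q p : R -> vec) : Prop :=
  forall (t : R) (i : nat), (i < 3)%nat ->
    is_derive (fun s => q s i) t (dH_dp G Gam Om g m (q t) (p t) t i) /\
    is_derive (fun s => p s i) t (- dH_dq G Gam Om g m (q t) (p t) t i).

Definition velocity (q : R -> vec) (t : R) : vec := fun i => Derive (fun s => q s i) t.

Definition action G Gam Om g m (q p : R -> vec) (t1 t2 : R) : R :=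
  RInt (fun t => dot (p t) (velocity q t) - Ham G Gam Om g m (q t) (p t) t) t1 t2.

Definition coeffs_ok (G Gam : R -> mat) (Om g : R -> vec) : Prop :=
  (forall t, symmetric (G t) /\ invertible (G t) /\ symmetric (Gam t)) /\
  (forall i j t, continuous (fun s => G s i j) t) /\
  (forall i j t, continuous (fun s => Gam s i j) t) /\
  (forall i t, continuous (fun s => Om s i) t) /\
  (forall i t, continuous (fun s => g s i) t).

(* Main.v *)
Require Import Defs.
From Stdlib Require Import Reals Lra Lia.
From Coquelicot Require Import Coquelicot.
Open Scope R_scope.

Definition tr (M : mat) : mat := fun i j => M j i.
Definition dHp_expl (G : R -> mat) (Om : R -> vec) (m : R) (q p : vec) (t : R) (i : nat) : R :=
  / (2 * m) * (mulmv (G t) p i + mulmv (tr (G t)) p i) - cross (Om t) q i.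
Definition dHq_expl (Gam : R -> mat) (Om g : R -> vec) (m : R) (q p : vec) (t : R) (i : nat) : R :=
  - (m / 2) * (mulmv (Gam t) q i + mulmv (tr (Gam t)) q i) - cross p (Om t) i - m * g t i.

Lemma dH_dp_eq G Gam Om g m q p t i : (i < 3)%nat ->
  dH_dp G Gam Om g m q p t i = dHp_expl G Om m q p t i.
Proof.
  intros Hi. unfold dH_dp.
  destruct i as [|[|[|i]]]; [| | | lia]; apply is_derive_unique;
  unfold Ham, dot, mulmv, cross, upd, dHp_expl, tr, mulmv, cross; simpl;
  auto_derive; auto; ring.
Qed.

Lemma dH_dq_eq G Gam Om g m q p t i : (i < 3)%nat ->
  dH_dq G Gam Om g m q p t i = dHq_expl Gam Om g m q p t i.
Proof.
  intros Hi. unfold dH_dq.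
  destruct i as [|[|[|i]]]; [| | | lia]; apply is_derive_unique;
  unfold Ham, dot, mulmv, cross, upd, dHq_expl, tr, mulmv, cross; simpl;
  auto_derive; auto; ring.
Qed.
Lemma traj_derivs G Gam Om g m q p : hamilton_traj G Gam Om g m q p ->
  forall t i, (i < 3)%nat ->
  is_derive (fun s => q s i) t (dHp_expl G Om m (q t) (p t) t i) /\
  is_derive (fun s => p s i) t (- dHq_expl Gam Om g m (q t) (p t) t i).
Proof.
  intros H t i Hi. destruct (H t i Hi) as [H1 H2].
  rewrite <- (dH_dp_eq G Gam Om g), <- (dH_dq_eq G Gam Om g) by exact Hi. split; assumption.
Qed.

Definition Iexpl G Gam Om g m (q p : R -> vec) t :=
  dot (p t) (fun i => dHp_expl G Om m (q t) (p t) t i) - Ham G Gam Om g m (q t) (p t) t.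

Lemma integrand_eq G Gam Om g m q p : hamilton_traj G Gam Om g m q p ->
  forall t, dot (p t) (velocity q t) - Ham G Gam Om g m (q t) (p t) t = Iexpl G Gam Om g m q p t.
Proof.
  intros H t. unfold Iexpl, dot, velocity.
  assert (E : forall i, (i < 3)%nat -> Derive (fun s => q s i) t = dHp_expl G Om m (q t) (p t) t i).
  { intros i Hi. apply is_derive_unique. apply (proj1 (traj_derivs _ _ _ _ _ _ _ H t i Hi)). }
  rewrite !E by lia.
  reflexivity.
Qed.

Lemma cR_plus (f h : R -> R) x : continuous f x -> continuous h x -> continuous (fun t => f t + h t) x.
Proof. intros; apply (continuous_plus f h); auto. Qed.
Lemma cR_minus (f h : R -> R) x : continuous f x -> continuous h x -> continuous (fun t => f t - h t) x.
Proof. intros; apply (continuous_minus f h); auto. Qed.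
Lemma cR_mult (f h : R -> R) x : continuous f x -> continuous h x -> continuous (fun t => f t * h t) x.
Proof. intros; apply (continuous_mult f h); auto. Qed.
Lemma cR_opp (f : R -> R) x : continuous f x -> continuous (fun t => - f t) x.
Proof. intros; apply (continuous_opp f); auto. Qed.

Lemma Iexpl_cont G Gam Om g m q p : coeffs_ok G Gam Om g -> hamilton_traj G Gam Om g m q p ->
  forall t, continuous (Iexpl G Gam Om g m q p) t.
Proof.
  intros [_ [HG [HGa [HO Hg]]]] H t.
  assert (Hq : forall i, (i < 3)%nat -> continuous (fun s => q s i) t).
  { intros i Hi. apply (ex_derive_continuous (K:=R_AbsRing) (V:=R_NormedModule)). eexists. apply (proj1 (traj_derivs _ _ _ _ _ _ _ H t i Hi)). }
  assert (Hp : forall i, (i < 3)%nat -> continuous (fun s => p s i) t).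
  { intros i Hi. apply (ex_derive_continuous (K:=R_AbsRing) (V:=R_NormedModule)). eexists. apply (proj2 (traj_derivs _ _ _ _ _ _ _ H t i Hi)). }
  unfold Iexpl, Ham, dHp_expl, dot, mulmv, tr, cross.
  repeat match goal with
  | |- continuous (fun _ => ?c) _ => apply continuous_const
  | |- continuous (fun t => @?a t + @?b t) _ => apply (cR_plus a b)
  | |- continuous (fun t => @?a t - @?b t) _ => apply (cR_minus a b)
  | |- continuous (fun t => @?a t * @?b t) _ => apply (cR_mult a b)
  | |- continuous (fun t => - @?a t) _ => apply (cR_opp a)
  | |- continuous (fun t => G t ?i ?j) _ => apply HG
  | |- continuous (fun t => Gam t ?i ?j) _ => apply HGa
  | |- continuous (fun t => Om t ?i) _ => apply HO
  | |- continuous (fun t => g t ?i) _ => apply Hg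
  | |- continuous (fun t => q t ?i) _ => apply Hq; lia
  | |- continuous (fun t => p t ?i) _ => apply Hp; lia
  end.
Qed.

Lemma dR_plus (f h : R -> R) x a b : is_derive f x a -> is_derive h x b -> is_derive (fun t => f t + h t) x (a + b).
Proof. intros; apply (is_derive_plus f h); auto. Qed.
Lemma dR_minus (f h : R -> R) x a b : is_derive f x a -> is_derive h x b -> is_derive (fun t => f t - h t) x (a - b).
Proof. intros; apply (is_derive_minus f h); auto. Qed.
Lemma dR_mult (f h : R -> R) x a b : is_derive f x a -> is_derive h x b -> is_derive (fun t => f t * h t) x (a * h x + f x * b).
Proof. intros. eapply is_derive_ext. 2: apply (is_derive_mult f h); eauto. reflexivity.
  simpl. intros; apply Rmult_comm. Qed.
Lemma dR_eq (f : R -> R) x a b : is_derive f x a -> a = b -> is_derive f x b.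
Proof. intros; subst; auto. Qed.
Lemma dR_divc (f : R -> R) x a c : is_derive f x a -> is_derive (fun t => f t / c) x (a / c).
Proof. intros. unfold Rdiv. apply (dR_eq _ _ (/c * a)). all: try (simpl; ring).
  eapply is_derive_ext. 2: apply (is_derive_scal f x (/c) a); eauto.
  simpl. intros. unfold scal; simpl; unfold mult; simpl. ring. Qed.
Lemma dR_cmul (f : R -> R) x a c : is_derive f x a -> is_derive (fun t => c * f t) x (c * a).
Proof. intros. apply (is_derive_scal f x c a); eauto. Qed.


Theorem theorem1 (G Gam : R -> mat) (Om g : R -> vec)
  (ma mb t1 t2 : R) (qa pa qb pb : R -> vec) :
  coeffs_ok G Gam Om g ->
  0 < ma -> 0 < mb -> t1 < t2 ->
  hamilton_traj G Gam Om g ma qa pa ->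
  hamilton_traj G Gam Om g mb qb pb ->
  let v2 : vec := fun i => pa t2 i / ma + pb t2 i / mb in
  let v1 : vec := fun i => pa t1 i / ma + pb t1 i / mb in
  action G Gam Om g ma qa pa t1 t2 / ma - / 2 * dot v2 (qa t2) + / 2 * dot v1 (qa t1)
  = action G Gam Om g mb qb pb t1 t2 / mb - / 2 * dot v2 (qb t2) + / 2 * dot v1 (qb t1).
Proof.
  intros Hc Hma Hmb H12 Ha Hb v2 v1.
  set (Phi := fun t => / 2 * ((pa t 0%nat / ma + pb t 0%nat / mb) * (qa t 0%nat - qb t 0%nat)
     + (pa t 1%nat / ma + pb t 1%nat / mb) * (qa t 1%nat - qb t 1%nat)
     + (pa t 2%nat / ma + pb t 2%nat / mb) * (qa t 2%nat - qb t 2%nat))).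
  set (df := fun t => Iexpl G Gam Om g ma qa pa t / ma - Iexpl G Gam Om g mb qb pb t / mb).
  assert (HD : forall t, is_derive Phi t (df t)).
  { intros t.
    pose proof (traj_derivs _ _ _ _ _ _ _ Ha t) as Da.
    pose proof (traj_derivs _ _ _ _ _ _ _ Hb t) as Db.
    eapply dR_eq.
    { unfold Phi.
      repeat match goal with
      | |- is_derive (fun t => / 2 * @?a t) _ _ => apply (dR_cmul a)
      | |- is_derive (fun t => @?a t + @?b t) _ _ => apply (dR_plus a b)
      | |- is_derive (fun t => @?a t - @?b t) _ _ => apply (dR_minus a b)
      | |- is_derive (fun t => @?a t * @?b t) _ _ => apply (dR_mult a b)
      | |- is_derive (fun t => @?a t / ?c) _ _ => apply (dR_divc a)
      | |- is_derive (fun t => qa t ?i) _ _ => apply (proj1 (Da i ltac:(lia)))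
      | |- is_derive (fun t => pa t ?i) _ _ => apply (proj2 (Da i ltac:(lia)))
      | |- is_derive (fun t => qb t ?i) _ _ => apply (proj1 (Db i ltac:(lia)))
      | |- is_derive (fun t => pb t ?i) _ _ => apply (proj2 (Db i ltac:(lia)))
      end. }
    match goal with |- ?l = ?r => change (@eq R l r) end.
    destruct Hc as [Hs _]. destruct (Hs t) as [SG [_ SGa]].
    unfold df, Iexpl, Ham, dHp_expl, dHq_expl, dot, mulmv, tr, cross.
    rewrite (SG 1%nat 0%nat), (SG 2%nat 0%nat), (SG 2%nat 1%nat) by lia.
    rewrite (SGa 1%nat 0%nat), (SGa 2%nat 0%nat), (SGa 2%nat 1%nat) by lia.
    field. lra. }
  set (Ia := Iexpl G Gam Om g ma qa pa). set (Ib := Iexpl G Gam Om g mb qb pb).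
  assert (EA : action G Gam Om g ma qa pa t1 t2 = RInt Ia t1 t2).
  { unfold action. apply RInt_ext. intros x _. apply (integrand_eq _ _ _ _ _ _ _ Ha). }
  assert (EB : action G Gam Om g mb qb pb t1 t2 = RInt Ib t1 t2).
  { unfold action. apply RInt_ext. intros x _. apply (integrand_eq _ _ _ _ _ _ _ Hb). }
  assert (CA : forall t, continuous Ia t) by (apply (Iexpl_cont _ _ _ _ _ _ _ Hc Ha)).
  assert (CB : forall t, continuous Ib t) by (apply (Iexpl_cont _ _ _ _ _ _ _ Hc Hb)).
  assert (RA : is_RInt Ia t1 t2 (RInt Ia t1 t2)).
  { apply (RInt_correct (V:=R_CompleteNormedModule)). apply (ex_RInt_continuous (V:=R_CompleteNormedModule)). intros; apply CA. }
  assert (RB : is_RInt Ib t1 t2 (RInt Ib t1 t2)).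
  { apply (RInt_correct (V:=R_CompleteNormedModule)). apply (ex_RInt_continuous (V:=R_CompleteNormedModule)). intros; apply CB. }
  assert (R1 : is_RInt df t1 t2 (/ ma * RInt Ia t1 t2 - / mb * RInt Ib t1 t2)).
  { eapply is_RInt_ext.
    2: apply (is_RInt_minus (V:=R_NormedModule)); apply (is_RInt_scal (V:=R_NormedModule)); eassumption.
    intros x _. unfold df. simpl. unfold scal, minus, plus, opp; simpl. unfold mult; simpl. fold Ia Ib. field. lra. }
  assert (R2 : is_RInt df t1 t2 (minus (Phi t2) (Phi t1))).
  { apply (is_RInt_derive (V:=R_CompleteNormedModule)). intros; apply HD.
    intros x _. unfold df. fold Ia Ib.
    apply (cR_minus (fun t => Ia t / ma) (fun t => Ib t / mb)).
    - apply (cR_mult Ia (fun _ => / ma)); [apply CA | apply continuous_const].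
    - apply (cR_mult Ib (fun _ => / mb)); [apply CB | apply continuous_const]. }
  apply (is_RInt_unique (V:=R_CompleteNormedModule)) in R1. apply (is_RInt_unique (V:=R_CompleteNormedModule)) in R2.
  rewrite R1 in R2. unfold minus, plus, opp in R2; simpl in R2.
  rewrite EA, EB.
  unfold Phi, v1, v2, dot in *.
  assert (ma <> 0) by lra. assert (mb <> 0) by lra.
  apply (Rmult_eq_reg_l 2); [| lra].
  unfold Rdiv in *. 
  nra.
Qed.
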